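(* There is an absolute constant $C>0$ such that for every integer $N\ge1$, every $k\in\Lambda_N$, every signed face $f$ and every dyadic scale $1\le H\le N$, \[ \#\{r\in\mathcal R_N: A_{r,f,H}(k)\neq\varnothing\}\le C N^2 H . \]
   Context: For an integer $N\ge1$, $\Lambda_N:=\{k\in\mathbb Z^3\setminus\{0\}:|k|_\infty\le N\}$, $|\cdot|$ is the Euclidean norm, $\mathcal R_N:=\{|k|^2:k\in\Lambda_N\}$. For $k\in\Lambda_N$, $A_r(k):=\{p\in\Lambda_N:|p|^2=r,\ k-p\in\Lambda_N\}$, contained in $B(k):=\prod_{j=1}^3[k_j-N,k_j+N]\cap\mathbb Z^3$. Signed faces are $f=(j,\sigma)$, $j\in\{1,2,3\}$, $\sigma\in\{\pm1\}$, ordered lexicographically. For $p\in B(k)$: $h_f(p,k):=k_j+N-p_j$ if $\sigma=+1$, $h_f(p,k):=p_j-(k_j-N)$ if $\sigma=-1$; $h_{\min}:=\min_f h_f$; $f(p)$ is the lexicographically first minimizing face; $H(p):=1$ if $h_{\min}=0$, else the power of $2$ with $H(p)\le h_{\min}<2H(p)$. For dyadic $H$ (a power of $2$), $A_{r,f,H}(k):=\{p\in A_r(k):f(p)=f,\ H(p)=H\}$. *)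

(* Defs.v *)
From mathcomp Require Import all_boot all_order all_algebra.
Set Implicit Arguments. Unset Strict Implicit. Unset Printing Implicit Defensive.
Import Order.TTheory GRing.Theory Num.Theory.
Local Open Scope ring_scope.

Definition pt := (int * int * int)%type.

Definition coord (p : pt) (j : 'I_3) : int :=
  match val j with 0%N => p.1.1 | 1%N => p.1.2 | _ => p.2 end.

Definition psub (k p : pt) : pt := (k.1.1 - p.1.1, k.1.2 - p.1.2, k.2 - p.2).

Definition inLam (N : nat) (p : pt) : bool :=
  (p != (0, 0, 0)) && [forall j : 'I_3, `|coord p j| <= N%:Z].

Definition sqn (p : pt) : nat := (`|p.1.1| ^ 2 + `|p.1.2| ^ 2 + `|p.2| ^ 2)%N.

Definition rng (N : nat) : seq int := [seq (i%:Z - N%:Z) | i <- iota 0 (2 * N).+1].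
Definition box (N : nat) : seq pt :=
  [seq (ab, c) | ab <- [seq (a, b) | a <- rng N, b <- rng N], c <- rng N].
Definition Lam (N : nat) : seq pt := [seq p <- box N | inLam N p].

Definition RN (N : nat) : seq nat := undup [seq sqn p | p <- Lam N].

Definition Ar (N r : nat) (k : pt) : seq pt :=
  [seq p <- Lam N | (sqn p == r) && inLam N (psub k p)].

(* Signed faces (j, sigma), sigma = true for +1 and false for -1. *)
Definition face := ('I_3 * bool)%type.

Definition faces : seq face :=
  [:: (0 : 'I_3, false); (0 : 'I_3, true); (1 : 'I_3, false); (1 : 'I_3, true);
      (2 : 'I_3, false); (2 : 'I_3, true)].

Definition hf (N : nat) (f : face) (p k : pt) : int :=
  if f.2 then coord k f.1 + N%:Z - coord p f.1
  else coord p f.1 - (coord k f.1 - N%:Z).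

Definition hmin (N : nat) (p k : pt) : int :=
  \big[Order.min/hf N (0 : 'I_3, false) p k]_(f <- faces) hf N f p k.

Definition fp (N : nat) (p k : pt) : face :=
  nth (0 : 'I_3, false) faces (find (fun f => hf N f p k == hmin N p k) faces).

Definition Hp (N : nat) (p k : pt) : nat :=
  if hmin N p k == 0 then 1%N else (2 ^ trunc_log 2 `|hmin N p k|)%N.

Definition ArfH (N r : nat) (f : face) (H : nat) (k : pt) : seq pt :=
  [seq p <- Ar N r k | (fp N p k == f) && (Hp N p k == H)].

Definition countR (N : nat) (k : pt) (f : face) (H : nat) : nat :=
  size [seq r <- RN N | ArfH N r f H k != [::]].

(* Main.v *)
Require Import Defs.
From mathcomp Require Import all_boot all_order all_algebra.
From mathcomp Require Import zify.
Set Implicit Arguments. Unset Strict Implicit. Unset Printing Implicit Defensive.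
Import Order.TTheory GRing.Theory Num.Theory.
Local Open Scope ring_scope.

Lemma rng_mem (M : nat) (x : int) : `|x| <= M%:Z -> x \in rng M.
Proof.
move=> hx; apply/mapP; exists (absz (x + M%:Z)).
  rewrite mem_iota; apply/andP; split; first by [].
  lia.
lia.
Qed.

Lemma size_rng M : size (rng M) = (2 * M).+1%N.
Proof. by rewrite size_map size_iota. Qed.

Lemma bigmin_mem (s : seq face) (idx : int) (F : face -> int) :
  \big[Order.min/idx]_(x <- s) F x \in idx :: map F s.
Proof.
elim: s => [|a s IH]; first by rewrite big_nil mem_head.
rewrite big_cons /Order.min; case: ifP => _.
  by rewrite inE mem_head orbT.
move: IH; rewrite !inE => /orP [->//|H]; by rewrite H !orbT.
Qed.

Lemma fp_hf N p k f : fp N p k = f -> hf N f p k = hmin N p k.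
Proof.
move=> <-; apply/eqP.
apply: (@nth_find _ (0 : 'I_3, false) (fun f => hf N f p k == hmin N p k)).
apply/hasP.
have := bigmin_mem faces (hf N (0 : 'I_3, false) p k) (fun f => hf N f p k).
rewrite -/(hmin N p k) inE => /orP [/eqP E|/mapP [x Hx E]].
  by exists (0 : 'I_3, false); [rewrite /faces mem_head| rewrite -E].
by exists x => //; rewrite -E.
Qed.

Lemma Hp_bound N p k m : Hp N p k = (2 ^ m)%N -> (`|hmin N p k| < 2 * 2 ^ m)%N.
Proof.
rewrite /Hp; case: eqP => [-> _|hne E]; first by rewrite /= muln_gt0 expn_gt0.
rewrite -E -expnS; apply: trunc_log_ltn => //.
Qed.

Definition mk (j : 'I_3) (a b c : int) : pt :=
  match val j with 0%N => (a, b, c) | 1%N => (b, a, c) | _ => (b, c, a) end.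
Definition o1 (j : 'I_3) (p : pt) : int :=
  match val j with 0%N => p.1.2 | _ => p.1.1 end.
Definition o2 (j : 'I_3) (p : pt) : int :=
  match val j with 0%N | 1%N => p.2 | _ => p.1.2 end.

Lemma mk_eq j p : p = mk j (Defs.coord p j) (o1 j p) (o2 j p).
Proof.
case: p => [[a b] c]; case: j => [[|[|[|?]]] ?] //.
Qed.

Definition box3 (A B C : seq int) : seq (int * int * int) :=
  [seq (ab, c) | ab <- [seq (a, b) | a <- A, b <- B], c <- C].

Definition Wd (N H : nat) (f : face) (k : pt) : seq int :=
  [seq (if f.2 then Defs.coord k f.1 + N%:Z - t else t + (Defs.coord k f.1 - N%:Z)) | t <- rng (2 * H)].

Definition T (N H : nat) (f : face) (k : pt) : seq pt :=
  [seq mk f.1 t.1.1 t.1.2 t.2 | t <- box3 (Wd N H f k) (rng N) (rng N)].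

Lemma size_T N H f k : size (T N H f k) = ((2 * (2 * H)).+1 * (2 * N).+1 * (2 * N).+1)%N.
Proof. by rewrite size_map /box3 !size_allpairs /Wd size_map !size_rng. Qed.

Lemma coord_o1 j p : exists i, o1 j p = Defs.coord p i.
Proof. case: j => [[|[|[|?]]] ?]. by exists (@Ordinal 3 1 isT). by exists (@Ordinal 3 0 isT). by exists (@Ordinal 3 0 isT). by exists (@Ordinal 3 0 isT). Qed.
Lemma coord_o2 j p : exists i, o2 j p = Defs.coord p i.
Proof. case: j => [[|[|[|?]]] ?]. by exists (@Ordinal 3 2 isT). by exists (@Ordinal 3 2 isT). by exists (@Ordinal 3 1 isT). by exists (@Ordinal 3 1 isT). Qed.

Theorem lemma4p7 :
  exists C : nat, (0 < C)%N /\
    forall (N : nat) (k : pt) (f : face) (m : nat),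
      (1 <= N)%N -> inLam N k -> (2 ^ m <= N)%N ->
      (countR N k f (2 ^ m) <= C * N ^ 2 * 2 ^ m)%N.
Proof.
exists 45%N; split => // N k f m hN _ _.
have hH : (1 <= 2 ^ m)%N by rewrite expn_gt0.
apply: (@leq_trans (size (map sqn (T N (2 ^ m) f k)))); last first.
  rewrite size_map size_T; move: hN hH; set H := (2 ^ m)%N; nia.
apply: uniq_leq_size; first by rewrite filter_uniq // undup_uniq.
move=> r; rewrite mem_filter => /andP [hA _].
case E: (ArfH N r f (2 ^ m) k) hA => [|p s] // _.
have : p \in ArfH N r f (2 ^ m) k by rewrite E mem_head.
rewrite !mem_filter => /andP [/andP [/eqP hf1 /eqP hH2]] /andP [/andP [/eqP <- _]].
move=> /andP [/andP [_ /forallP hc] _].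
apply: map_f.
apply/mapP; exists (Defs.coord p f.1, o1 f.1 p, o2 f.1 p); last exact: mk_eq.
rewrite /box3; apply: allpairs_f; last first.
  by have [i ->] := coord_o2 f.1 p; apply: rng_mem.
apply: allpairs_f; last by have [i ->] := coord_o1 f.1 p; apply: rng_mem.
apply/mapP; exists (hf N f p k).
  apply: rng_mem; rewrite fp_hf //.
  have := Hp_bound hH2; lia.
rewrite /hf; case: (f.2); lia.
Qed.
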